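(* Let $\mathcal W$ be a finite set of arms, $(Y_t(w))_{w\in\mathcal W}$, $t=1,2,\dots$, i.i.d. vectors of potential outcomes with nonzero variance and finite $(2+\delta)$-th moments for some $\delta>0$, $W_t$ assigned with known strictly positive probabilities $e_t(w)=\mathbb P[W_t=w\mid H^{t-1}]$ (the conditional law of $W_t$ given $H^{t-1}$ and current and future potential outcomes depending only on $H^{t-1}$), $Y_t=Y_t(W_t)$, $H^{t-1}=\{(W_s,Y_s)\}_{s<t}$. Fix $w$ and suppose $e_t(w)\ge Ct^{-\alpha}$ for all $t$, for some $\alpha\in[0,1)$ and $C>0$. For each horizon $T$, let $\lambda_t(w)$, $t=1,\dots,T$, be $H^{t-1}$-measurable allocation rates with $\lambda_t(w)<1$ for $t<T$, $\lambda_T(w)=1$, and, for a finite positive constant $C'$, $$\frac{1}{T-t+1}\le\lambda_t(w)\le C'\,\frac{e_t(w)}{t^{-\alpha}+T^{1-\alpha}-t^{1-\alpha}}.$$ Define nonnegative weights $h_t(w)$ recursively by $$\frac{h_t^2(w)}{e_t(w)}=\Big(1-\sum_{s=1}^{t-1}\frac{h_s^2(w)}{e_s(w)}\Big)\lambda_t(w).$$ Then the $h_t(w)$ are $H^{t-1}$-measurable and satisfy: (i) $\big(\sum_{t=1}^T h_t(w)\big)^2\big/\mathbb E\big[\sum_{t=1}^T h_t^2(w)/e_t(w)\big]\to\infty$ in probability; (ii) for some $p>1$, $\sum_{t=1}^T \frac{h_t^2(w)}{e_t(w)}\big/\mathbb E\big[\sum_{t=1}^T\frac{h_t^2(w)}{e_t(w)}\big]\to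 1$ in $L_p$; (iii) for some $\delta>0$, $\sum_{t=1}^T \frac{h_t^{2+\delta}(w)}{e_t^{1+\delta}(w)}\big/\mathbb E\big[\sum_{t=1}^T\frac{h_t^2(w)}{e_t(w)}\big]^{1+\delta/2}\to 0$ in probability; all as $T\to\infty$.
   Context: $H^{t-1}$-measurable means a function of the observed arms and outcomes up to time $t-1$. The weights and allocation rates depend on the horizon $T$. *)

(* Defs.v *)
From HB Require Import structures.
From mathcomp Require Import all_boot all_order all_algebra.
From mathcomp Require Import all_classical all_reals all_analysis.
Set Implicit Arguments. Unset Strict Implicit. Unset Printing Implicit Defensive.
Import Order.TTheory GRing.Theory Num.Theory.
Import numFieldNormedType.Exports.
Local Open Scope classical_set_scope.
Local Open Scope ring_scope.

(* Times are t = 1, 2, ...; the value at index 0 is never used. *)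

Section Defs.
Context {R : realType} {d : measure_display} {Omega : measurableType d}
  {K : finType}.

Definition gen_sigma (G : set (set Omega)) : set (set Omega) :=
  <<s G >>.

Definition measurable_wrt (F : set (set Omega)) (f : Omega -> R) : Prop :=
  forall B : set R, measurable B -> F (f @^-1` B).

(* generators of H^{t-1} = sigma((W_s, Y_s(W_s)), 1 <= s < t) *)
Definition hist_gen (W : nat -> Omega -> K) (Y : nat -> K -> Omega -> R)
  (t : nat) : set (set Omega) :=
  [set A | exists s, (0 < s < t)%N /\
     ((exists S : set K, A = W s @^-1` S) \/
      (exists B : set R, measurable B /\ A = (fun x => Y s (W s x) x) @^-1` B))].

Definition hist W Y t := gen_sigma (hist_gen W Y t).

Definition hist_future_gen (W : nat -> Omega -> K) (Y : nat -> K -> Omega -> R)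
  (t : nat) : set (set Omega) :=
  hist_gen W Y t `|`
  [set A | exists s v B, (t <= s)%N /\ measurable B /\ A = Y s v @^-1` B].

Definition vec_sigma (Y : nat -> K -> Omega -> R) (t : nat) : set (set Omega) :=
  gen_sigma [set A | exists v B, measurable B /\ A = Y t v @^-1` B].

Definition indep_vectors (P : probability Omega R) (Y : nat -> K -> Omega -> R)
  : Prop :=
  forall (s : seq nat) (A : nat -> set Omega), uniq s ->
    (forall t, t \in s -> (0 < t)%N /\ vec_sigma Y t (A t)) ->
    fine (P (\bigcap_(t in [set t | t \in s]) A t)) =
    \prod_(t <- s) fine (P (A t)).

Definition ident_distr (P : probability Omega R) (Y : nat -> K -> Omega -> R)
  : Prop :=
  forall (t : nat) (B : K -> set R), (0 < t)%N -> (forall v, measurable (B v)) ->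
    P (\bigcap_(v in setT) (Y t v @^-1` B v)) =
    P (\bigcap_(v in setT) (Y 1%N v @^-1` B v)).

Definition Exp (P : probability Omega R) (X : Omega -> R) : R :=
  fine (\int[P]_x (X x)%:E).

Definition Var (P : probability Omega R) (X : Omega -> R) : R :=
  Exp P (fun x => (X x - Exp P X) ^+ 2).

End Defs.

(* Main.v *)
Require Import Defs.
From HB Require Import structures.
From mathcomp Require Import all_boot all_order all_algebra.
From mathcomp Require Import all_classical all_reals all_analysis.
From mathcomp Require Import measurable_realfun.
From mathcomp Require Import ring lra.
Import Order.TTheory GRing.Theory Num.Theory.
Import numFieldNormedType.Exports.
Local Open Scope classical_set_scope.
Local Open Scope ring_scope.

Section Meas.
Context {R : realType} {d : measure_display} {Omega : measurableType d}.

Lemma mwrtP (G : set (set Omega)) (f : Omega -> R) :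
  measurable_wrt (gen_sigma G) f <->
  measurable_fun (setT : set (g_sigma_algebraType G)) f.
Proof.
split.
- move=> mf _ B mB; rewrite setTI; exact: mf.
- move=> mf B mB; have := mf measurableT B mB; rewrite setTI; exact.
Qed.

Lemma mwrt_mono (G1 G2 : set (set Omega)) (f : Omega -> R) :
  G1 `<=` G2 -> measurable_wrt (gen_sigma G1) f -> measurable_wrt (gen_sigma G2) f.
Proof.
move=> G12 mf B mB; apply: (sub_smallest2r _ G12 (mf B mB)).
exact: smallest_sigma_algebra.
Qed.

Lemma mwrtM G (f g : Omega -> R) : measurable_wrt (gen_sigma G) f ->
  measurable_wrt (gen_sigma G) g -> measurable_wrt (gen_sigma G) (f \* g).
Proof. by move=> /mwrtP mf /mwrtP mg; apply/mwrtP; exact: measurable_funM. Qed.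

Lemma mwrtB G (f g : Omega -> R) : measurable_wrt (gen_sigma G) f ->
  measurable_wrt (gen_sigma G) g -> measurable_wrt (gen_sigma G) (f \- g).
Proof. by move=> /mwrtP mf /mwrtP mg; apply/mwrtP; exact: measurable_funB. Qed.

Lemma mwrtD G (f g : Omega -> R) : measurable_wrt (gen_sigma G) f ->
  measurable_wrt (gen_sigma G) g -> measurable_wrt (gen_sigma G) (f \+ g).
Proof. by move=> /mwrtP mf /mwrtP mg; apply/mwrtP; exact: measurable_funD. Qed.

Lemma mwrt_cst G (r : R) : measurable_wrt (gen_sigma G) (cst r : Omega -> R).
Proof. by apply/mwrtP; exact: measurable_cst. Qed.

Lemma mwrt_sqrt G (f : Omega -> R) : measurable_wrt (gen_sigma G) f ->
  measurable_wrt (gen_sigma G) (fun x => Num.sqrt (f x)).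
Proof.
move=> /mwrtP mf; apply/mwrtP; apply: measurableT_comp => //.
exact: continuous_measurable_fun (@sqrt_continuous R).
Qed.

Lemma mwrt_ext G (f g : Omega -> R) : f =1 g ->
  measurable_wrt (gen_sigma G) f -> measurable_wrt (gen_sigma G) g.
Proof. by move=> /funext ->. Qed.

End Meas.
Section Det.
Context {R : realType}.

Lemma sum_one (T : nat) (q L : nat -> R) : (0 < T)%N ->
  (forall t, (0 < t <= T)%N -> q t = (1 - \sum_(1 <= s < t) q s) * L t) ->
  L T = 1 -> \sum_(1 <= t < T.+1) q t = 1.
Proof.
move=> T0 hq LT; rewrite big_nat_recr //= hq ?T0 ?leqnn // LT mulr1.
by rewrite addrC subrK.
Qed.

Lemma rem_bound (T : nat) (q L : nat -> R) :
  (forall t, (0 < t <= T)%N -> q t = (1 - \sum_(1 <= s < t) q s) * L t) ->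
  (forall t, (0 < t < T)%N -> L t < 1) ->
  (forall t, (0 < t <= T)%N -> 1 / (T%:R - t%:R + 1) <= L t) ->
  forall t, (0 < t <= T)%N ->
    1 - \sum_(1 <= s < t) q s <= (T%:R - t%:R + 1) / T%:R.
Proof.
move=> hq hL1 hL0; elim=> [//|t IH] /andP[_ tT].
have T0 : (0 < T%:R :> R) by rewrite ltr0n; case: (T) tT.
case: t IH tT => [_ tT|t IH tT].
  rewrite big_geq // subr0 (_ : T%:R - 1%:R + 1 = T%:R :> R) ?divff //;
    [exact: lt0r_neq0| by rewrite subrK].
have tT' : (t.+1 <= T)%N by apply: ltnW.
have Ht : (0 < t.+1 <= T)%N by [].
rewrite big_nat_recr //= opprD addrA.
set Rt := 1 - _.
have -> : Rt - q t.+1 = Rt * (1 - L t.+1) by rewrite hq // /Rt; ring.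
have L1 : L t.+1 < 1 by apply: hL1; rewrite tT.
have hb := IH Ht.
have tTr : (t.+1%:R <= T%:R :> R) by rewrite ler_nat.
have p0 : 0 < T%:R - t.+1%:R + 1 :> R by lra.
have hl := hL0 _ Ht.
apply: (le_trans (ler_wpM2r _ hb)); first lra.
have hu : (T%:R - t.+1%:R + 1) * L t.+1 >= 1.
  by have := ler_wpM2l (ltW p0) hl; rewrite mul1r mulfV ?gt_eqF.
have -> : (T%:R - t.+2%:R + 1) / T%:R = (T%:R - t.+1%:R) * T%:R^-1 :> R.
  rewrite mulrSr; ring.
have -> : (T%:R - t.+1%:R + 1) / T%:R * (1 - L t.+1) =
  ((T%:R - t.+1%:R + 1) - (T%:R - t.+1%:R + 1) * L t.+1) * T%:R^-1 by ring.
apply: ler_wpM2r; first by rewrite invr_ge0 ltW.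
lra.
Qed.

Lemma amgm (a : R) (t T : nat) : 0 <= a < 1 -> (0 < t <= T)%N ->
  t%:R `^ (1 - a) * T%:R `^ a <= (1 - a) * t%:R + a * T%:R.
Proof.
move=> /andP[a0 a1] /andP[t0 tT].
have tp : 0 <= t%:R :> R by [].
have Tp : 0 <= T%:R :> R by [].
have [->|ap] := eqVneq a 0.
  by rewrite subr0 powRr0 powRr1 // mulr1 mul0r addr0 mul1r.
have ap' : 0 < a by rewrite lt_neqAle eq_sym ap a0.
have b0 : 0 < 1 - a by lra.
have ib : 0 < (1 - a)^-1 by rewrite invr_gt0.
have ia : 0 < a^-1 by rewrite invr_gt0.
have := @conjugate_powR _ (t%:R `^ (1 - a)) (T%:R `^ a) (1 - a)^-1 a^-1
  (powR_ge0 _ _) (powR_ge0 _ _) ib ia.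
rewrite !GRing.invrK subrK => /(_ erefl).
rewrite -!powRrM !mulfV ?gt_eqF // !powRr1 //.
by rewrite [t%:R * _]mulrC [T%:R * _]mulrC.
Qed.

Lemma key_pow (a : R) (t T : nat) : 0 <= a < 1 -> (0 < t <= T)%N ->
  (1 - a) * T%:R `^ (1 - a) * (T%:R - t%:R + 1) <=
  T%:R * (t%:R `^ (- a) + T%:R `^ (1 - a) - t%:R `^ (1 - a)).
Proof.
move=> ha ht; have := amgm a t T ha ht.
case/andP: ha => a0 a1; case/andP: ht => t0 tT.
have tp : 0 < t%:R :> R by rewrite ltr0n.
have Tp : 0 < T%:R :> R by rewrite ltr0n (leq_trans t0 tT).
have tTr : t%:R <= T%:R :> R by rewrite ler_nat.
have A : 0 < T%:R `^ a by apply: powR_gt0.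
have B : 0 < t%:R `^ a by apply: powR_gt0.
have BA : t%:R `^ a <= T%:R `^ a by apply: ge0_ler_powR => //; rewrite nnegrE ltW.
rewrite powRN !powRB ?(gt_eqF tp) ?(gt_eqF Tp) ?implybT // (powRr1 (ltW tp)) (powRr1 (ltW Tp)).
set x := T%:R `^ a in A BA *; set y := t%:R `^ a in B BA *.
set c := x / y.
have c1 : 1 <= c by rewrite /c ler_pdivlMr // mul1r.

have -> : t%:R / y * x = t%:R * c by rewrite /c; field; rewrite gt_eqF.
move=> hc.
have key : 0 <= c + T%:R - t%:R * c - (1 - a) * (T%:R - t%:R + 1) by nra.
have E : T%:R * (y^-1 + T%:R / x - t%:R / y) - (1 - a) * (T%:R / x) * (T%:R - t%:R + 1)
  = T%:R / x * (c + T%:R - t%:R * c - (1 - a) * (T%:R - t%:R + 1)).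
  rewrite /c; field; rewrite ?gt_eqF //.
rewrite -subr_ge0 E; apply: mulr_ge0 => //.
by apply: divr_ge0; apply: ltW.
Qed.

Lemma q_bound (a C' : R) (T t : nat) (E Lt Rt qt : R) :
  0 <= a < 1 -> (0 < t <= T)%N -> 0 < E -> 0 < C' ->
  qt = Rt * Lt -> 0 <= Lt ->
  Lt <= C' * (E / (t%:R `^ (- a) + T%:R `^ (1 - a) - t%:R `^ (1 - a))) ->
  Rt <= (T%:R - t%:R + 1) / T%:R ->
  qt <= C' * E / ((1 - a) * T%:R `^ (1 - a)).
Proof.
move=> ha ht E0 C0 -> L0 LD RT.
have K := key_pow a t T ha ht.
case/andP: ha => a0 a1; case/andP: ht => t0 tT.
set D := _ + _ - _ in K LD.
set P := T%:R `^ (1 - a) in K *.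
have Tp : 0 < T%:R :> R by rewrite ltr0n (leq_trans t0 tT).
have tTr : t%:R <= T%:R :> R by rewrite ler_nat.
have P0 : 0 < P by apply: powR_gt0.
have u0 : 0 < T%:R - t%:R + 1 :> R by lra.
have b0 : 0 < 1 - a by lra.
have bP : 0 < (1 - a) * P by apply: mulr_gt0.
have D0 : 0 < D.
  have : 0 < T%:R * D by apply: (lt_le_trans _ K); apply: mulr_gt0.
  by rewrite pmulr_rgt0.
have RHS0 : 0 <= C' * E / ((1 - a) * P).
  by apply: divr_ge0; [apply: mulr_ge0; apply: ltW | apply: ltW].
have [Rn|Rp] := lerP Rt 0.
  apply: le_trans RHS0; exact: mulr_le0_ge0.
apply: (le_trans (ler_pM (ltW Rp) L0 RT LD)).
have -> : (T%:R - t%:R + 1) / T%:R * (C' * (E / D)) =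
  (C' * E) * ((T%:R - t%:R + 1) / (T%:R * D)).
  by field; rewrite !gt_eqF.
apply: ler_wpM2l; first by apply: mulr_ge0; apply: ltW.
rewrite ler_pdivrMr ?mulr_gt0 // ler_pdivlMl //.
Qed.

Lemma powR_big (b K : R) : 0 < b -> \forall T \near \oo, K < T%:R `^ b.
Proof.
move=> b0.
set K' := Num.max K 0 + 1.
have m0 : (0:R) <= Num.max K 0 by rewrite le_max lexx orbT.
have mK : K <= Num.max K 0 by rewrite le_max lexx.
have K'0 : 0 < K' by rewrite /K'; lra.
have KK : K < K' by rewrite /K'; lra.
set z := K' `^ b^-1.
near=> T.
have zT : z <= T%:R by near: T; exact: nbhs_infty_ger.
apply: (lt_le_trans KK).
have -> : K' = z `^ b by rewrite /z -powRrM mulVf ?gt_eqF // powRr1 //; apply: ltW.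
apply: ge0_ler_powR => //; [exact: ltW | rewrite nnegrE; exact: powR_ge0 | ].
rewrite nnegrE; exact: ler0n.
Unshelve. all: by end_near.
Qed.

End Det.

Theorem theorem2 (R : realType) (d : measure_display) (Omega : measurableType d)
  (P : probability Omega R) (K : finType)
  (Y : nat -> K -> Omega -> R) (W : nat -> Omega -> K)
  (e : nat -> K -> Omega -> R)
  (dlt0 : R) (w : K) (alpha C C' : R)
  (lam : nat -> nat -> Omega -> R) (h : nat -> nat -> Omega -> R) :
  (* potential outcomes: measurable, i.i.d. vectors, nonzero variance,
     finite (2 + dlt0)-th moments *)
  (forall t v, measurable_fun setT (Y t v)) ->
  indep_vectors P Y -> ident_distr P Y ->
  (forall v, Var P (Y 1%N v) != 0) ->
  0 < dlt0 ->
  (forall v, (\int[P]_x ((`|Y 1%N v x| `^ (2 + dlt0))%:E) < +oo)%E) ->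
  (* assignments and their known, strictly positive propensities *)
  (forall t (S : set K), measurable (W t @^-1` S)) ->
  (forall t v x, 0 < e t v x) ->
  (forall t v, (0 < t)%N -> measurable_wrt (hist W Y t) (e t v)) ->
  (forall t v A, (0 < t)%N -> gen_sigma (hist_future_gen W Y t) A ->
     (P (A `&` (W t @^-1` [set v])) = \int[P]_(x in A) (e t v x)%:E)%E) ->
  (* lower bound on the propensity of arm w *)
  0 <= alpha < 1 -> 0 < C ->
  (forall t x, (0 < t)%N -> C * (t%:R `^ (- alpha)) <= e t w x) ->
  (* allocation rates lam T t, for each horizon T *)
  0 < C' ->
  (forall T t, (0 < t <= T)%N -> measurable_wrt (hist W Y t) (lam T t)) ->
  (forall T t x, (0 < t < T)%N -> lam T t x < 1) ->
  (forall T x, (0 < T)%N -> lam T T x = 1) ->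
  (forall T t x, (0 < t <= T)%N ->
     1 / ((T - t)%:R + 1) <= lam T t x /\
     lam T t x <= C' * (e t w x /
        (t%:R `^ (- alpha) + T%:R `^ (1 - alpha) - t%:R `^ (1 - alpha)))) ->
  (* nonnegative weights defined by the recursion *)
  (forall T t x, 0 <= h T t x) ->
  (forall T t x, (0 < t <= T)%N ->
     h T t x ^+ 2 / e t w x =
     (1 - \sum_(1 <= s < t) h T s x ^+ 2 / e s w x) * lam T t x) ->
  let V T x := \sum_(1 <= t < T.+1) h T t x ^+ 2 / e t w x in
  let EV T := fine (\int[P]_x (V T x)%:E) in
  (forall T t, (0 < t <= T)%N -> measurable_wrt (hist W Y t) (h T t)) /\
  (* (i) *)
  (forall M : R,
     (fun T => fine (P [set x | (\sum_(1 <= t < T.+1) h T t x) ^+ 2 / EV T <= M]))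
       @ \oo --> 0) /\
  (* (ii) *)
  (exists p : R, 1 < p /\
     (fun T => (\int[P]_x ((`|V T x / EV T - 1| `^ p)%:E))%E) @ \oo --> 0%E) /\
  (* (iii) *)
  (exists dlt : R, 0 < dlt /\
     forall eps : R, 0 < eps ->
     (fun T => fine (P [set x | eps <
        `|(\sum_(1 <= t < T.+1) h T t x `^ (2 + dlt) / e t w x `^ (1 + dlt))
          / EV T `^ (1 + dlt / 2)|])) @ \oo --> 0).
Proof.
move=> mY iY idY vY d0 mom mW e0 me he ha C0 eC C'0 mlam lam1 lamT lamb h0 hrec V EV.
case/andP: (ha) => a0 a1.
pose q T t x := h T t x ^+ 2 / e t w x.
have hq : forall T t x, (0 < t <= T)%N ->
    q T t x = (1 - \sum_(1 <= s < t) q T s x) * lam T t x.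
  by move=> T t x ht; exact: hrec.
have V1 : forall T x, (0 < T)%N -> V T x = 1.
  move=> T x T0; apply: (sum_one T (fun t => q T t x) (fun t => lam T t x) T0).
    by move=> t ht; exact: hq.
  exact: lamT.
have EV1 : forall T, (0 < T)%N -> EV T = 1.
  move=> T T0; rewrite /EV (eq_integral (cst 1%E)); last by move=> x _; rewrite V1.
  by rewrite integral_cst //= probability_setT mul1e.
pose eps T := C' / ((1 - alpha) * T%:R `^ (1 - alpha)).
have eps0 : forall T, (0 < T)%N -> 0 < eps T.
  move=> T T0; apply: divr_gt0 => //; apply: mulr_gt0; first lra.
  by apply: powR_gt0; rewrite ltr0n.
have qb : forall T t x, (0 < t <= T)%N -> q T t x <= eps T * e t w x.
  move=> T t x ht.
  have [L0 LD] := lamb T t x ht.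
  have tT : (t <= T)%N by case/andP: ht.
  have hL0 : forall s, (0 < s <= T)%N -> 1 / (T%:R - s%:R + 1) <= lam T s x.
    move=> s hs; have [+ _] := lamb T s x hs.
    by case/andP: hs => _ sT; rewrite natrB.
  have Lp : 0 <= lam T t x.
    apply: le_trans (hL0 t ht); apply: divr_ge0 => //.
    have : t%:R <= T%:R :> R by rewrite ler_nat.
    lra.
  have RB := rem_bound T (fun t => q T t x) (fun t => lam T t x)
    (fun t ht => hq T t x ht) (fun t ht => lam1 T t x ht) hL0 t ht.
  have := @q_bound R alpha C' T t (e t w x) (lam T t x)
    (1 - \sum_(1 <= s < t) q T s x) (q T t x) ha ht (e0 t w x) C'0
    (hq T t x ht) Lp LD RB.
  by rewrite /eps mulrAC.
have Sb : forall T x, (0 < T)%N ->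
    1 <= eps T * (\sum_(1 <= t < T.+1) h T t x) ^+ 2.
  move=> T x T0.
  have e0T := eps0 T T0.
  have H1 : 1 <= Num.sqrt (eps T) * \sum_(1 <= t < T.+1) h T t x.
    rewrite -(V1 T x T0) /V mulr_sumr; apply: ler_sum_nat => t /andP[t1 tT].
    have ht : (0 < t <= T)%N by rewrite t1 -ltnS tT.
    have et := e0 t w x.
    have he2 : (h T t x / e t w x) ^+ 2 <= eps T.
      have -> : (h T t x / e t w x) ^+ 2 = q T t x / e t w x.
        by rewrite /q; field; rewrite gt_eqF.
      by rewrite ler_pdivrMr //; apply: qb.
    have hs : h T t x / e t w x <= Num.sqrt (eps T).
      rewrite -(ger0_norm (divr_ge0 (h0 T t x) (ltW et))) -sqrtr_sqr.
      exact: ler_wsqrtr.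
    have -> : h T t x ^+ 2 / e t w x = h T t x * (h T t x / e t w x).
      by rewrite expr2 mulrA.
    rewrite [X in _ <= X]mulrC; apply: ler_pM => //.
    by apply: divr_ge0; [exact: h0 | exact: ltW].
  have y0 : 0 <= Num.sqrt (eps T) * \sum_(1 <= t < T.+1) h T t x.
    by apply: mulr_ge0 => //; apply: sumr_ge0 => t _.
  have : 1 <= (Num.sqrt (eps T) * \sum_(1 <= t < T.+1) h T t x) ^+ 2 by nra.
  by rewrite exprMn sqr_sqrtr // ltW.
split.
  move=> T t ht.
  have hmono : forall s t, (s <= t)%N -> hist_gen W Y s `<=` hist_gen W Y t.
    move=> s t' st A [s' [/andP[s0 s's] HA]]; exists s'; split => //.
    by rewrite s0 (leq_trans s's st).
  have mq : forall t, (0 < t <= T)%N -> measurable_wrt (hist W Y t) (q T t).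
    elim/ltn_ind => {ht} t IH ht.
    have Hsum : forall m, (m <= t)%N ->
        measurable_wrt (hist W Y t) (fun x => \sum_(1 <= s < m) q T s x).
      elim=> [_|m IHm mt].
        apply: (@mwrt_ext _ _ _ _ (cst 0)); last exact: mwrt_cst.
        by move=> x; rewrite big_geq.
      case: m IHm mt => [_ _|m IHm mt].
        apply: (@mwrt_ext _ _ _ _ (cst 0)); last exact: mwrt_cst.
        by move=> x; rewrite big_geq.
      apply: (@mwrt_ext _ _ _ _ ((fun x => \sum_(1 <= s < m.+1) q T s x) \+ q T m.+1)).
        by move=> x; rewrite [RHS]big_nat_recr.
      apply: mwrtD; first by apply: IHm; apply: ltnW.
      apply: (mwrt_mono _ _ _ (hmono _ _ (ltnW mt))).
      apply: IH => //; case/andP: ht => _ tT; rewrite /=.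
      exact: leq_trans (ltnW mt) tT.
    apply: (@mwrt_ext _ _ _ _ ((cst 1 \- (fun x => \sum_(1 <= s < t) q T s x))
       \* lam T t)).
      by move=> x; rewrite (hq T t x ht).
    apply: mwrtM; last exact: mlam.
    apply: mwrtB; [exact: mwrt_cst | exact: Hsum].
  apply: (@mwrt_ext _ _ _ _ (fun x => Num.sqrt (e t w x * q T t x))).
    move=> x; rewrite /q mulrC divfK ?gt_eqF // sqrtr_sqr ger0_norm //.
  apply: mwrt_sqrt; apply: mwrtM; first by apply: me; case/andP: ht.
  exact: mq.
split.
  move=> M; apply: cvg_near_cst; near=> T.
  have T0 : (0 < T)%N by near: T; exact: nbhs_infty_ge.
  have hK : C' * M / (1 - alpha) < T%:R `^ (1 - alpha).
    by near: T; apply: powR_big; lra.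
  have epsM : eps T * M < 1.
    have P0 : 0 < T%:R `^ (1 - alpha) by apply: powR_gt0; rewrite ltr0n.
    have b0 : 0 < 1 - alpha by lra.
    move: hK; rewrite ltr_pdivrMr // /eps => hK.
    rewrite mulrAC ltr_pdivrMr ?mulr_gt0 // mul1r.
    by rewrite [X in _ < X]mulrC.
  rewrite [X in P X](_ : _ = set0) ?measure0 //.
  apply/seteqP; split => [x /= hx|//].
  move: hx; rewrite EV1 // divr1 => hx.
  have := Sb T x T0.
  have := ler_wpM2l (ltW (eps0 T T0)) hx.
  lra.
split.
  exists 2; split; first lra.
  apply: cvg_near_cst; near=> T.
  have T0 : (0 < T)%N by near: T; exact: nbhs_infty_ge.
  rewrite (eq_integral (cst 0%E)); first exact: integral0.
  move=> x _; rewrite V1 // EV1 // divr1 subrr normr0 powR0 //.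
exists 2; split; first lra.
move=> eps1 eps10.
apply: cvg_near_cst; near=> T.
have T0 : (0 < T)%N by near: T; exact: nbhs_infty_ge.
have hK : C' / ((1 - alpha) * eps1) < T%:R `^ (1 - alpha).
  by near: T; apply: powR_big; lra.
have epsl : eps T < eps1.
  have P0 : 0 < T%:R `^ (1 - alpha) by apply: powR_gt0; rewrite ltr0n.
  have b0 : 0 < 1 - alpha by lra.
  move: hK; rewrite ltr_pdivrMr ?mulr_gt0 // /eps => hK.
  rewrite ltr_pdivrMr ?mulr_gt0 //.
  by move: hK; rewrite mulrCA mulrA [X in _ < X -> _]mulrC.
rewrite [X in P X](_ : _ = set0) ?measure0 //.
apply/seteqP; split => [x /= hx|//].
move: hx; rewrite EV1 // powR1 divr1.
have e4 : (2 + 2 : R) = 4%:R by lra.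
have e3 : (1 + 2 : R) = 3%:R by lra.
rewrite e4 e3.
have -> : \sum_(1 <= t < T.+1) h T t x `^ 4%:R / e t w x `^ 3%:R =
          \sum_(1 <= t < T.+1) q T t x * (q T t x / e t w x).
  apply: eq_big_nat => t _.
  rewrite !powR_mulrn ?h0 //; last exact: ltW.
  rewrite /q; field; rewrite gt_eqF //.
have Hle : \sum_(1 <= t < T.+1) q T t x * (q T t x / e t w x) <= eps T.
  rewrite -[X in _ <= X]mulr1 -(V1 T x T0) /V mulr_sumr.
  apply: ler_sum_nat => t /andP[t1 tT].
  have ht : (0 < t <= T)%N by rewrite t1 -ltnS tT.
  rewrite mulrC; apply: ler_wpM2r; first by rewrite /q divr_ge0 ?sqr_ge0 // ltW.
  by rewrite ler_pdivrMr //; apply: qb.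
have Hge : 0 <= \sum_(1 <= t < T.+1) q T t x * (q T t x / e t w x).
  apply: sumr_ge0 => t _; apply: mulr_ge0; rewrite /q.
    by rewrite divr_ge0 ?sqr_ge0 // ltW.
  by rewrite !divr_ge0 ?sqr_ge0 // ltW.
rewrite ger0_norm //.
lra.
Unshelve. all: by end_near.
Qed.
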